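(* Let $|I|$ be a measurable cardinal, $\mathcal U$ a non-principal $\omega$-complete (countably complete) ultrafilter on $I$, and $\mathbb X_i=\langle X_i,\rho_i\rangle$ ($i\in I$) $L$-structures. Then the ultraproduct $\prod_{\mathcal U}\mathbb X_i$ is connected if and only if $\{i\in I:\mathbb X_i\text{ is connected}\}\in\mathcal U$.
   Context: $L$ is a language with one binary relation symbol; an $L$-structure is $\mathbb X=\langle X,\rho\rangle$, $X\neq\emptyset$, $\rho\subseteq X^2$. Connectivity is defined via the reflexivization $\rho_R=\rho\cup\{(x,x):x\in X\}$: $\mathbb X$ is connected iff for all $x,y\in X$ there are $n\in\omega$, $z_0,\dots,z_{n-1}\in X$ and $\epsilon\in\{0,1\}^{n+1}$ with $x\,\rho_R^{\epsilon_0}\,z_0\,\rho_R^{\epsilon_1}\cdots z_{n-1}\,\rho_R^{\epsilon_n}\,y$, where $\rho_R^0=\rho_R$ and $\rho_R^1=\rho_R^{-1}$. The ultraproduct $\prod_{\mathcal U}\mathbb X_i$ has universe $(\prod_i X_i)/\!\sim_{\mathcal U}$, where $x\sim_{\mathcal U}y$ iff $\{i:x_i=y_i\}\in\mathcal U$, and relation $[x]\,\rho\,[y]$ iff $\{i:x_i\,\rho_i\,y_i\}\in\mathcal U$. *)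

(* Defs.v *)
From Stdlib Require Import Arith.

Set Implicit Arguments.

(* An L-structure: a carrier with one binary relation.
   Non-emptiness of carriers is imposed as an explicit hypothesis where needed. *)
Record Lstr := mkLstr { carrier : Type ; rel : carrier -> carrier -> Prop }.

Definition relR (M : Lstr) (x y : carrier M) : Prop := @rel M x y \/ x = y.

(* x rho_R^eps y, with eps = false for rho_R and eps = true for rho_R^{-1} *)
Definition relR_eps (M : Lstr) (eps : bool) (x y : carrier M) : Prop :=
  if eps then @relR M y x else @relR M x y.

(* The chain is w_0 = x, w_{k+1} = z_k (k < n), w_{n+1} = y. *)
Definition chain_pt (M : Lstr) (x y : carrier M) (n : nat) (z : nat -> carrier M)
  (k : nat) : carrier M :=
  if Nat.eqb k 0 then x else if Nat.leb k n then z (k - 1) else y.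

Definition connected (M : Lstr) : Prop :=
  forall x y : carrier M, exists (n : nat) (z : nat -> carrier M) (eps : nat -> bool),
    forall k, k <= n ->
      @relR_eps M (eps k) (@chain_pt M x y n z k) (@chain_pt M x y n z (S k)).

Definition is_ultrafilter (I : Type) (U : (I -> Prop) -> Prop) : Prop :=
  U (fun _ => True) /\
  ~ U (fun _ => False) /\
  (forall A B : I -> Prop, U A -> (forall i, A i -> B i) -> U B) /\
  (forall A B : I -> Prop, U A -> U B -> U (fun i => A i /\ B i)) /\
  (forall A : I -> Prop, U A \/ U (fun i => ~ A i)).

Definition nonprincipal (I : Type) (U : (I -> Prop) -> Prop) : Prop :=
  forall i0 : I, ~ U (fun i => i = i0).

Definition omega_complete (I : Type) (U : (I -> Prop) -> Prop) : Prop :=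
  forall F : nat -> I -> Prop, (forall n, U (F n)) -> U (fun i => forall n, F n i).

Definition card_lt (J I : Type) : Prop :=
  (exists f : J -> I, forall a b, f a = f b -> a = b) /\
  ~ (exists g : I -> J, forall a b, g a = g b -> a = b).

Definition measurable_card (I : Type) : Prop :=
  ~ (exists f : I -> nat, forall a b, f a = f b -> a = b) /\
  exists V : (I -> Prop) -> Prop,
    is_ultrafilter V /\ nonprincipal V /\
    forall (J : Type) (F : J -> I -> Prop),
      card_lt J I -> (forall j, V (F j)) -> V (fun i => forall j, F j i).

(* The ultraproduct: universe = classes of prod_i X_i modulo ~_U. *)
Definition ueq (I : Type) (X : I -> Lstr) (U : (I -> Prop) -> Prop)
  (x y : forall i, carrier (X i)) : Prop := U (fun i => x i = y i).

Definition uclass (I : Type) (X : I -> Lstr) (U : (I -> Prop) -> Prop)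
  (x : forall i, carrier (X i)) : (forall i, carrier (X i)) -> Prop := ueq X U x.

Definition ultraprod_carrier (I : Type) (X : I -> Lstr) (U : (I -> Prop) -> Prop) : Type :=
  { A : (forall i, carrier (X i)) -> Prop | exists x, A = uclass X U x }.

Definition ultraprod_rel (I : Type) (X : I -> Lstr) (U : (I -> Prop) -> Prop)
  (A B : ultraprod_carrier X U) : Prop :=
  exists x y, proj1_sig A = uclass X U x /\ proj1_sig B = uclass X U y /\
              U (fun i => rel (X i) (x i) (y i)).

Definition ultraprod (I : Type) (X : I -> Lstr) (U : (I -> Prop) -> Prop) : Lstr :=
  mkLstr (@ultraprod_rel I X U).

(* Main.v *)
Require Import Defs.
From Stdlib Require Import Arith Lia Classical ClassicalEpsilon FunctionalExtensionality PropExtensionality ProofIrrelevance.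
Set Implicit Arguments.

Lemma U_up (I : Type) (U : (I -> Prop) -> Prop) (hU : is_ultrafilter U) {A B : I -> Prop} :
  U A -> (forall i, A i -> B i) -> U B.
Proof. destruct hU as (_&_&h&_). eauto. Qed.

Lemma U_and (I : Type) (U : (I -> Prop) -> Prop) (hU : is_ultrafilter U) {A B : I -> Prop} :
  U A -> U B -> U (fun i => A i /\ B i).
Proof. destruct hU as (_&_&_&h&_). eauto. Qed.

Lemma U_T (I : Type) (U : (I -> Prop) -> Prop) (hU : is_ultrafilter U) : U (fun _ => True).
Proof. destruct hU as (h&_). exact h. Qed.

Lemma U_cases (I : Type) (U : (I -> Prop) -> Prop) (hU : is_ultrafilter U) (A : I -> Prop) :
  U A \/ U (fun i => ~ A i).
Proof. destruct hU as (_&_&_&_&h). eauto. Qed.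

Lemma U_ne (I : Type) (U : (I -> Prop) -> Prop) (hU : is_ultrafilter U) {A : I -> Prop} :
  U A -> exists i, A i.
Proof.
  intros h. apply NNPP; intro hn. apply (proj1 (proj2 hU)).
  apply (U_up hU h). intros i hi; apply hn; eauto.
Qed.

Lemma uclass_eq (I : Type) {X : I -> Lstr} {U : (I -> Prop) -> Prop} (hU : is_ultrafilter U)
  {a b : forall i, carrier (X i)} : uclass X U a = uclass X U b -> U (fun i => a i = b i).
Proof.
  intro h. assert (H : uclass X U b b).
  { unfold uclass, ueq. apply (U_up hU (U_T hU)); auto. }
  rewrite <- h in H. exact H.
Qed.

Lemma uclass_ext (I : Type) {X : I -> Lstr} {U : (I -> Prop) -> Prop} (hU : is_ultrafilter U)
  {a b : forall i, carrier (X i)} : U (fun i => a i = b i) -> uclass X U a = uclass X U b.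
Proof.
  intro h. apply functional_extensionality; intro x. apply propositional_extensionality.
  unfold uclass, ueq. split; intro h'.
  - apply (U_up hU (U_and hU h h')). intros i [e1 e2]. congruence.
  - apply (U_up hU (U_and hU h h')). intros i [e1 e2]. congruence.
Qed.

Lemma up_eq (I : Type) (X : I -> Lstr) (U : (I -> Prop) -> Prop) (A B : ultraprod_carrier X U) :
  proj1_sig A = proj1_sig B -> A = B.
Proof. destruct A as [A pa], B as [B pb]; simpl; intro e; subst; f_equal; apply proof_irrelevance. Qed.

Definition cls (I : Type) (X : I -> Lstr) (U : (I -> Prop) -> Prop) (a : forall i, carrier (X i))
  : carrier (ultraprod X U) :=
  exist (fun A => exists x, A = uclass X U x) (uclass X U a) (ex_intro _ a eq_refl).

Lemma rel_down (I : Type) {X : I -> Lstr} {U : (I -> Prop) -> Prop} (hU : is_ultrafilter U)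
  {A B : carrier (ultraprod X U)} {a b : forall i, carrier (X i)} :
  proj1_sig A = uclass X U a -> proj1_sig B = uclass X U b -> rel (ultraprod X U) A B ->
  U (fun i => rel (X i) (a i) (b i)).
Proof.
  intros ha hb [x [y [hx [hy hr]]]]. rewrite ha in hx; rewrite hb in hy.
  apply (uclass_eq hU) in hx; apply (uclass_eq hU) in hy.
  apply (U_up hU (U_and hU hx (U_and hU hy hr))). intros i [e1 [e2 r]]. rewrite e1, e2; exact r.
Qed.

Lemma step_down (I : Type) {X : I -> Lstr} {U : (I -> Prop) -> Prop} (hU : is_ultrafilter U)
  {e : bool} {A B : carrier (ultraprod X U)} {a b : forall i, carrier (X i)} :
  proj1_sig A = uclass X U a -> proj1_sig B = uclass X U b ->
  relR_eps (ultraprod X U) e A B -> U (fun i => relR_eps (X i) e (a i) (b i)).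
Proof.
  intros ha hb. destruct e; unfold relR_eps, relR; intros [r|q].
  - apply (rel_down hU hb ha) in r. apply (U_up hU r); auto.
  - subst. rewrite hb in ha. apply (uclass_eq hU) in ha. apply (U_up hU ha); auto.
  - apply (rel_down hU ha hb) in r. apply (U_up hU r); auto.
  - subst. rewrite hb in ha. apply (uclass_eq hU) in ha. apply (U_up hU ha); auto.
Qed.

Lemma step_up (I : Type) {X : I -> Lstr} {U : (I -> Prop) -> Prop} (hU : is_ultrafilter U)
  {e : bool} {A B : carrier (ultraprod X U)} {a b : forall i, carrier (X i)} :
  proj1_sig A = uclass X U a -> proj1_sig B = uclass X U b ->
  U (fun i => relR_eps (X i) e (a i) (b i)) -> relR_eps (ultraprod X U) e A B.
Proof.
  intros ha hb H. destruct e; unfold relR_eps, relR in *.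
  - destruct (U_cases hU (fun i => rel (X i) (b i) (a i))) as [h|h].
    + left. exists b, a. auto.
    + right. apply up_eq. rewrite ha, hb. apply (uclass_ext hU).
      apply (U_up hU (U_and hU H h)). intros i [[r|q] nr]; [contradiction|exact q].
  - destruct (U_cases hU (fun i => rel (X i) (a i) (b i))) as [h|h].
    + left. exists a, b. auto.
    + right. apply up_eq. rewrite ha, hb. apply (uclass_ext hU).
      apply (U_up hU (U_and hU H h)). intros i [[r|q] nr]; [contradiction|exact q].
Qed.

Lemma chain_rep (I : Type) {X : I -> Lstr} {U : (I -> Prop) -> Prop}
  {A B : carrier (ultraprod X U)} {a b : forall i, carrier (X i)}
  {z : nat -> carrier (ultraprod X U)} {r : nat -> forall i, carrier (X i)} (n k : nat) :
  proj1_sig A = uclass X U a -> proj1_sig B = uclass X U b ->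
  (forall j, proj1_sig (z j) = uclass X U (r j)) ->
  proj1_sig (chain_pt (ultraprod X U) A B n z k)
  = uclass X U (fun i => chain_pt (X i) (a i) (b i) n (fun j => r j i) k).
Proof.
  intros ha hb hz. unfold chain_pt. destruct (Nat.eqb k 0); [exact ha|].
  destruct (Nat.leb k n); [apply hz|exact hb].
Qed.

Lemma fin_choice (I : Type) (U : (I -> Prop) -> Prop) (hU : is_ultrafilter U)
  (E : I -> nat -> bool) {T : I -> Prop} :
  U T -> forall m, exists e : nat -> bool, U (fun i => T i /\ forall k, k < m -> E i k = e k).
Proof.
  intros hT m; induction m as [|m [e he]].
  - exists (fun _ => false). apply (U_up hU hT). intros; split; [auto| intros; lia].
  - destruct (U_cases hU (fun i => E i m = true)) as [h|h].
    + exists (fun k => if Nat.eqb k m then true else e k).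
      apply (U_up hU (U_and hU he h)). intros i [[t hk] hm]. split; auto.
      intros k hk'. destruct (Nat.eqb_spec k m). subst; auto. apply hk; lia.
    + exists (fun k => if Nat.eqb k m then false else e k).
      apply (U_up hU (U_and hU he h)). intros i [[t hk] hm]. split; auto.
      intros k hk'. destruct (Nat.eqb_spec k m). subst; destruct (E i m); [exfalso; auto|reflexivity].
      apply hk; lia.
Qed.

Theorem theorem2p7 (I : Type) (U : (I -> Prop) -> Prop) (X : I -> Lstr)
  (hI : measurable_card I)
  (hU : is_ultrafilter U) (hnp : nonprincipal U) (hom : omega_complete U)
  (hne : forall i, inhabited (carrier (X i))) :
  connected (ultraprod X U) <-> U (fun i => connected (X i)).
Proof.
  split.
  - intros hc. destruct (U_cases hU (fun i => connected (X i))) as [h|h]; [exact h|exfalso].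
    assert (hp : forall i, exists ab : carrier (X i) * carrier (X i), ~ connected (X i) ->
      ~ exists n z eps, forall k, k <= n -> relR_eps (X i) (eps k)
          (chain_pt (X i) (fst ab) (snd ab) n z k) (chain_pt (X i) (fst ab) (snd ab) n z (S k))).
    { intro i. destruct (hne i) as [x0]. destruct (classic (connected (X i))) as [c|c].
      - exists (x0,x0); tauto.
      - unfold connected in c. apply not_all_ex_not in c as [x c].
        apply not_all_ex_not in c as [y c]. exists (x,y); intros _; exact c. }
    assert (hch : exists f : forall i, carrier (X i) * carrier (X i), forall i, ~ connected (X i) ->
      ~ exists n z eps, forall k, k <= n -> relR_eps (X i) (eps k)
          (chain_pt (X i) (fst (f i)) (snd (f i)) n z k) (chain_pt (X i) (fst (f i)) (snd (f i)) n z (S k))).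
    { exists (fun i => proj1_sig (constructive_indefinite_description _ (hp i))).
      intro i. exact (proj2_sig (constructive_indefinite_description _ (hp i))). }
    destruct hch as [f hf].
    destruct (hc (cls X U (fun i => fst (f i))) (cls X U (fun i => snd (f i)))) as [n [z [eps hz]]].
    assert (hr : exists r : nat -> forall i, carrier (X i),
               forall j, proj1_sig (z j) = uclass X U (r j)).
    { exists (fun j => proj1_sig (constructive_indefinite_description _ (proj2_sig (z j)))).
      intro j. exact (proj2_sig (constructive_indefinite_description _ (proj2_sig (z j)))). }
    destruct hr as [r hr].
    assert (hall : U (fun i => forall k, k <= n -> relR_eps (X i) (eps k)
         (chain_pt (X i) (fst (f i)) (snd (f i)) n (fun j => r j i) k)
         (chain_pt (X i) (fst (f i)) (snd (f i)) n (fun j => r j i) (S k)))).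
    { apply hom. intro k. destruct (le_dec k n) as [hk|hk].
      - pose proof (step_down hU
          (chain_rep (A := cls X U (fun i => fst (f i))) (B := cls X U (fun i => snd (f i)))
             n k eq_refl eq_refl hr)
          (chain_rep (A := cls X U (fun i => fst (f i))) (B := cls X U (fun i => snd (f i)))
             n (S k) eq_refl eq_refl hr) (hz k hk)) as H.
        apply (U_up hU H). auto.
      - apply (U_up hU (U_T hU)). intros; lia. }
    destruct (U_ne hU (U_and hU hall h)) as [i [hi ni]].
    apply (hf i ni). exists n, (fun j => r j i), eps. exact hi.
  - intros hC A B.
    destruct (proj2_sig A) as [a ha]. destruct (proj2_sig B) as [b hb].
    assert (hp : forall i, exists t : nat * (nat -> carrier (X i)) * (nat -> bool),
      connected (X i) -> forall k, k <= fst (fst t) -> relR_eps (X i) (snd t k)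
        (chain_pt (X i) (a i) (b i) (fst (fst t)) (snd (fst t)) k)
        (chain_pt (X i) (a i) (b i) (fst (fst t)) (snd (fst t)) (S k))).
    { intro i. destruct (classic (connected (X i))) as [c|c].
      - destruct (c (a i) (b i)) as [n [z [e hz]]]. exists (n,z,e); intros _; exact hz.
      - exists (0, fun _ => a i, fun _ => false); tauto. }
    assert (hch : exists f : forall i, nat * (nat -> carrier (X i)) * (nat -> bool),
      forall i, connected (X i) -> forall k, k <= fst (fst (f i)) -> relR_eps (X i) (snd (f i) k)
        (chain_pt (X i) (a i) (b i) (fst (fst (f i))) (snd (fst (f i))) k)
        (chain_pt (X i) (a i) (b i) (fst (fst (f i))) (snd (fst (f i))) (S k))).
    { exists (fun i => proj1_sig (constructive_indefinite_description _ (hp i))).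
      intro i. exact (proj2_sig (constructive_indefinite_description _ (hp i))). }
    destruct hch as [f hf].
    assert (hm : exists m, U (fun i => connected (X i) /\ fst (fst (f i)) = m)).
    { apply NNPP; intro hn.
      assert (H : forall m, U (fun i => ~ (connected (X i) /\ fst (fst (f i)) = m))).
      { intro m. destruct (U_cases hU (fun i => connected (X i) /\ fst (fst (f i)) = m)) as [h|h].
        - exfalso; eauto.
        - exact h. }
      apply hom in H. destruct (U_ne hU (U_and hU hC H)) as [i [c hn']].
      exact (hn' (fst (fst (f i))) (conj c eq_refl)). }
    destruct hm as [m hm].
    destruct (fin_choice hU (fun i => snd (f i)) hm (S m)) as [e hG].
    exists m, (fun j => cls X U (fun i => snd (fst (f i)) j)), e. intros k hk.
    apply (step_up hU
      (chain_rep (z := fun j => cls X U (fun i => snd (fst (f i)) j))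
         (r := fun j i => snd (fst (f i)) j) m k ha hb (fun j => eq_refl))
      (chain_rep (z := fun j => cls X U (fun i => snd (fst (f i)) j))
         (r := fun j i => snd (fst (f i)) j) m (S k) ha hb (fun j => eq_refl))).
    apply (U_up hU hG). intros i [[c hn] he].
    specialize (hf i c). rewrite hn in hf.
    replace (e k) with (snd (f i) k) by (apply he; lia).
    apply hf; lia.
Qed.
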